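(* Let $I_1,\dots,I_n$ be i.i.d. Bernoulli random variables with $\Pr[I_i=1]=p=1-q$, $0<q<1$, let $I_{n+1}=\prod_{j=1}^n(1-I_j)$, and let $P_i=I_i/\sum_{j=1}^{n+1}I_j$ for $i=1,\dots,n+1$. Let $\pi_1,\dots,\pi_{n+1}\ge0$ with $\pi_i>0$ for some $i\le n$, and let $W_i=\big(\sum_{j=1}^{n+1}\pi_j\big)P_i$ for $i=1,\dots,n+1$ (homogeneous tontine with active administrator). Then $E[W_i]=\pi_i$ for all $i=1,\dots,n+1$ if and only if $$\pi_i=\frac1n\sum_{j=1}^n\pi_j\ \ (i=1,\dots,n)\qquad\text{and}\qquad \pi_{n+1}=\frac{q^n}{1-q^n}\sum_{j=1}^n\pi_j,$$ i.e. all participants invest the same amount $\pi$ and $\pi_{n+1}=\frac{nq^n}{1-q^n}\pi$. *)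

(* Defs.v *)
From HB Require Import structures.
From mathcomp Require Import all_boot all_order all_algebra.
Set Implicit Arguments. Unset Strict Implicit. Unset Printing Implicit Defensive.
Import Order.TTheory GRing.Theory Num.Theory.
Local Open Scope ring_scope.

(* Sample space: outcomes w : {ffun 'I_n -> bool}, w j = true iff I_{j+1} = 1.
   Indices 1..n+1 of the paper are 'I_n.+1, the administrator (n+1) is ord_max. *)

Section Tontine.
Variables (R : realFieldType) (n : nat).

Definition bern_prob (q : R) (w : {ffun 'I_n -> bool}) : R :=
  \prod_(j < n) (if w j then 1 - q else q).

Definition tind (w : {ffun 'I_n -> bool}) (i : 'I_n.+1) : R :=
  if unlift ord_max i is Some j then (w j)%:R
  else \prod_(j < n) (1 - (w j)%:R).

Definition tshare (w : {ffun 'I_n -> bool}) (i : 'I_n.+1) : R :=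
  tind w i / \sum_(j < n.+1) tind w j.

Definition tpayout (pi : 'I_n.+1 -> R) (w : {ffun 'I_n -> bool}) (i : 'I_n.+1) : R :=
  (\sum_(j < n.+1) pi j) * tshare w i.

Definition expect_payout (q : R) (pi : 'I_n.+1 -> R) (i : 'I_n.+1) : R :=
  \sum_(w : {ffun 'I_n -> bool}) bern_prob q w * tpayout pi w i.

End Tontine.

(* Main.v *)
Require Import Defs.
From HB Require Import structures.
From mathcomp Require Import all_boot all_order all_algebra all_fingroup.
From mathcomp Require Import ring lra.
Import Order.TTheory GRing.Theory Num.Theory.
Local Open Scope ring_scope.

Section Aux.
Variables (R : realFieldType) (n : nat).

Definition Nw (w : {ffun 'I_n -> bool}) : R :=
  \sum_(k < n) (w k)%:R + \prod_(k < n) (1 - (w k)%:R).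

Lemma widen_lift (k : 'I_n) : widen_ord (leqnSn n) k = lift ord_max k.
Proof. by apply: val_inj; rewrite /= /bump leqNgt ltn_ord. Qed.

Lemma tind_lift w (k : 'I_n) : tind R w (lift ord_max k) = (w k)%:R.
Proof. by rewrite /tind liftK. Qed.

Lemma tind_max w : tind R w ord_max = \prod_(j < n) (1 - (w j)%:R).
Proof. by rewrite /tind unlift_none. Qed.

Lemma sum_tind w : \sum_(j < n.+1) tind R w j = Nw w.
Proof.
rewrite big_ord_recr /= tind_max /Nw; congr (_ + _).
by apply: eq_bigr => k _; rewrite widen_lift tind_lift.
Qed.

Lemma Nw_gt0 w : 0 < Nw w.
Proof.
have fge0 : forall b : bool, 0 <= 1 - b%:R :> R by case; rewrite ?subrr ?subr0.
case: (boolP [exists k, w k]) => [/existsP [k wk]|].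
  rewrite /Nw (bigD1 k) //= wk.
  apply: (@lt_le_trans _ _ 1); first exact: ltr01.
  rewrite -addrA lerDl addr_ge0 //; first by apply: sumr_ge0 => i _; case: (w i).
  by apply: prodr_ge0 => i _.
rewrite negb_exists => /forallP H.
rewrite /Nw big1 ?add0r; last by move=> i _; move: (H i); case: (w i).
rewrite big1 ?ltr01 // => i _; move: (H i); case: (w i) => //= _; by rewrite subr0.
Qed.

Definition EP (q : R) (i : 'I_n.+1) : R :=
  \sum_(w : {ffun 'I_n -> bool}) bern_prob q w * tshare R w i.

Lemma payoutE q pi i : expect_payout q pi i = (\sum_(j < n.+1) pi j) * EP q i.
Proof.
rewrite /expect_payout /EP mulr_sumr; apply: eq_bigr => w _.
by rewrite /tpayout mulrCA.
Qed.

Lemma bern_sum q : \sum_(w : {ffun 'I_n -> bool}) bern_prob (R:=R) q w = 1.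
Proof.
rewrite /bern_prob -(bigA_distr_bigA (fun (j : 'I_n) (b : bool) => if b then 1 - q else q)).
by rewrite big1 // => j _; rewrite big_bool /= subrK.
Qed.

Lemma EP_sum q : \sum_(i < n.+1) EP q i = 1.
Proof.
rewrite /EP exchange_big /= -(bern_sum q); apply: eq_bigr => w _.
rewrite -mulr_sumr /tshare -mulr_suml sum_tind divff ?mulr1 //.
by apply: lt0r_neq0; apply: Nw_gt0.
Qed.

Lemma EP_max q : EP q ord_max = q ^+ n.
Proof.
have -> : EP q ord_max = \sum_(w : {ffun 'I_n -> bool})
     \prod_(j < n) (if w j then 0 else q).
  apply: eq_bigr => w _; rewrite /tshare sum_tind /bern_prob tind_max.
  case: (boolP [exists k, w k]) => [/existsP [k wk]|].
    rewrite [RHS](bigD1 k) //= wk mul0r [\prod_(j < n) (1 - _)](bigD1 k) //= wk subrr mul0r mul0r mulr0 //.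
  rewrite negb_exists => /forallP H.
  have P1 : \prod_(j < n) (1 - (w j)%:R) = 1 :> R.
    by rewrite big1 // => i _; move: (H i); case: (w i) => //= _; rewrite subr0.
  have S0 : \sum_(j < n) (w j)%:R = 0 :> R.
    by rewrite big1 // => i _; move: (H i); case: (w i).
  rewrite /Nw P1 S0 add0r invr1 !mulr1.
  by apply: eq_bigr => i _; move: (H i); case: (w i).
rewrite -(bigA_distr_bigA (fun (j : 'I_n) (b : bool) => if b then 0 else q)).
rewrite -[n in q ^+ n]card_ord -prodr_const; apply: eq_bigr => j _.
by rewrite big_bool /= add0r.
Qed.

Lemma EP_sym q (i j : 'I_n) : EP q (lift ord_max i) = EP q (lift ord_max j).
Proof.
pose t := tperm i j.
pose s := fun w : {ffun 'I_n -> bool} => [ffun k => w (t k)].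
have sK : cancel s s by move=> w; apply/ffunP => k; rewrite !ffunE tpermK.
rewrite /EP (reindex_inj (can_inj sK)); apply: eq_bigr => w _.
have hb : bern_prob q (s w) = bern_prob q w.
  rewrite /bern_prob (reindex_inj (@perm_inj _ t)); apply: eq_bigr => k _.
  by rewrite ffunE tpermK.
have hN : Nw (s w) = Nw w.
  rewrite /Nw (reindex_inj (@perm_inj _ t)) [in X in _ + X](reindex_inj (@perm_inj _ t)).
  by congr (_ + _); apply: eq_bigr => k _; rewrite ffunE tpermK.
rewrite hb /tshare !sum_tind hN !tind_lift ffunE /t tpermL.
by [].
Qed.

Lemma sum_nonmax (F : 'I_n.+1 -> R) :
  \sum_(j < n.+1 | j != ord_max) F j = \sum_(k < n) F (lift ord_max k).
Proof.
have := @bigD1_ord _ _ _ _ ord_max xpredT F isT.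
have := @bigD1 R _ 0 _ ord_max xpredT F isT.
move=> /(_ +%R) E1 /(_ +%R 0) E2.
move: E2; rewrite E1 /= => /addrI ->.
by apply: eq_bigr.
Qed.

End Aux.

Theorem mainTheorem12 (R : realFieldType) (n : nat) (q : R)
    (pi : 'I_n.+1 -> R) :
  0 < q -> q < 1 ->
  (forall i, 0 <= pi i) ->
  (exists i : 'I_n.+1, i != ord_max /\ 0 < pi i) ->
  ((forall i : 'I_n.+1, expect_payout q pi i = pi i) <->
   ((forall i : 'I_n.+1, i != ord_max ->
       pi i = n%:R^-1 * \sum_(j < n.+1 | j != ord_max) pi j) /\
    pi ord_max = q ^+ n / (1 - q ^+ n) * \sum_(j < n.+1 | j != ord_max) pi j)).
Proof.
move=> q0 q1 _ [i0 [i0m _]].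
have [k0 _] : exists k : 'I_n, True.
  by case: (unliftP ord_max i0) i0m => [k _|->]; [exists k | rewrite eqxx].
have n0 : n != 0%N by case: n k0 {i0 i0m pi} => [[]|].
have nR : n%:R != 0 :> R by rewrite pnatr_eq0.
set c := EP R n q (lift ord_max k0).
have Ec : forall i : 'I_n.+1, i != ord_max -> EP R n q i = c.
  move=> i; case: (unliftP ord_max i) => [k -> _|->]; last by rewrite eqxx.
  exact: EP_sym.
have hsum : n%:R * c + q ^+ n = 1.
  rewrite -[RHS](EP_sum R n q) (bigD1 ord_max) //= EP_max sum_nonmax addrC.
  congr (_ + _); rewrite (eq_bigr (fun=> c)); last by move=> k _; exact: EP_sym.
  by rewrite sumr_const card_ord mulr_natl.
have qn1 : q ^+ n < 1 by rewrite exprn_ilt1 ?ltW.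
have qn1' : 1 - q ^+ n != 0 by rewrite subr_eq0 eq_sym lt_eqF.
have cE : c = (1 - q ^+ n) / n%:R.
  apply: (mulfI nR); rewrite mulrCA divff // mulr1.
  by rewrite -[X in X - _]hsum addrK.
set T := \sum_(j < n.+1 | j != ord_max) pi j.
have ST : \sum_(j < n.+1) pi j = T + pi ord_max.
  by rewrite (bigD1 ord_max) //= addrC.
split.
  move=> H.
  have Hi : forall i, i != ord_max -> pi i = (\sum_(j < n.+1) pi j) * c.
    by move=> i im; rewrite -H payoutE Ec.
  have Hm : pi ord_max = (\sum_(j < n.+1) pi j) * q ^+ n.
    by rewrite -H payoutE EP_max.
  have TE : T = n%:R * ((\sum_(j < n.+1) pi j) * c).
    rewrite /T sum_nonmax (eq_bigr (fun=> (\sum_(j < n.+1) pi j) * c)).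
      by rewrite sumr_const card_ord mulr_natl.
    by move=> k _; rewrite Hi // eq_sym neq_lift.
  split.
    by move=> i im; rewrite Hi // TE; field.
  move: Hm TE; rewrite ST cE => Hm TE.
  have e : T = (T + pi ord_max) * (1 - q ^+ n).
    by rewrite {1}TE; field.
  rewrite {1}Hm {2}e; field; exact: qn1'.
move=> [Hi Hm] i.
have SE : \sum_(j < n.+1) pi j = T / (1 - q ^+ n).
  rewrite ST Hm; field; exact: qn1'.
rewrite payoutE SE.
case: (eqVneq i ord_max) => [->|im].
  by rewrite EP_max Hm; field.
rewrite Ec // Hi // cE; field; apply/andP; split => //.
Qed.
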